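(* Let $\mathcal{A},\mathcal{C}$ be small categories and let $\Gamma,P:\mathcal{A}^{op}\times\mathcal{A}\times\mathcal{C}^{op}\times\mathcal{C}\to\mathbf{Set}$ be functors. Let $h$ be a dinatural transformation, dinatural in $(z,x)\in\mathcal{A}\times\mathcal{C}$, from $(z',z,x',x)\mapsto\Gamma(z',z,x',x)$ to $(z',z,x',x)\mapsto P(z',z,x',x)$, with components $h_{z,x}:\Gamma(z,z,x,x)\to P(z,z,x,x)$. Then there is a dinatural transformation $J(h)$, dinatural in $(a,b,x)\in\mathcal{A}^{op}\times\mathcal{A}\times\mathcal{C}$, from the dipresheaf $(a',b',x',a,b,x)\mapsto \hom_{\mathcal{A}}(a,b)\times\Gamma(b',a',x',x)$ to the dipresheaf $(a',b',x',a,b,x)\mapsto P(a,b,x',x)$ (here $a'\in\mathcal{A}$, $b'\in\mathcal{A}^{op}$, $x'\in\mathcal{C}^{op}$ are the contravariant arguments), with components $$J(h)_{a,b,x}:\hom_{\mathcal{A}}(a,b)\times\Gamma(b,a,x,x)\to P(a,b,x,x),$$ satisfying the computation rule $J(h)_{z,z,x}(\mathrm{id}_z,k)=h_{z,x}(k)$ for all objects $z\in\mathcal{A}$, $x\in\mathcal{C}$ and all $k\in\Gamma(z,z,x,x)$.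
   Context: A dipresheaf on a category $\mathcal{B}$ is a functor $\mathcal{B}^{op}\times\mathcal{B}\to\mathbf{Set}$; more generally a difunctor is a functor $\mathcal{B}^{op}\times\mathcal{B}\to\mathcal{D}$. For difunctors $F,G:\mathcal{B}^{op}\times\mathcal{B}\to\mathcal{D}$, a dinatural transformation $\alpha:F\Rightarrow G$ is a family of morphisms $\alpha_x:F(x,x)\to G(x,x)$, $x\in\mathcal{B}$, such that for every $f:a\to b$ in $\mathcal{B}$: $G(f,\mathrm{id}_b)\circ\alpha_b\circ F(\mathrm{id}_b,f)=G(\mathrm{id}_a,f)\circ\alpha_a\circ F(f,\mathrm{id}_a)$ as maps $F(b,a)\to G(a,b)$. When $\mathcal{B}$ is a product of categories (e.g. $\mathcal{A}\times\mathcal{C}$ or $\mathcal{A}^{op}\times\mathcal{A}\times\mathcal{C}$), a functor $\mathcal{B}^{op}\times\mathcal{B}\to\mathbf{Set}$ is written with its arguments reordered, and ''dinatural in $(z,x)$'' means dinatural as a family indexed by objects of the product category. Note $\hom_{\mathcal{A}}(a,b)$ is covariant in $a\in\mathcal{A}^{op}$ and $b\in\mathcal{A}$. *)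

(* Defs.v *)
Set Implicit Arguments.
Unset Strict Implicit.

Record Cat : Type := {
  ob :> Type;
  hom : ob -> ob -> Type;
  idm : forall a, hom a a;
  comp : forall a b c, hom b c -> hom a b -> hom a c;
  comp_idl : forall a b (f : hom a b), comp (idm b) f = f;
  comp_idr : forall a b (f : hom a b), comp f (idm a) = f;
  comp_assoc : forall a b c d (f : hom a b) (g : hom b c) (h : hom c d),
      comp h (comp g f) = comp (comp h g) f }.
Arguments hom {c} a b : rename.
Arguments idm {c} a : rename.
Arguments comp {c a b c0} g f : rename.

Definition opCat (C : Cat) : Cat.
Proof.
refine {| ob := ob C; hom := fun a b => @hom C b a; idm := fun a => idm a;
          comp := fun a b c g f => comp f g |}.
- intros; apply comp_idr.
- intros; apply comp_idl.
- intros; symmetry; apply comp_assoc.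
Defined.

Definition prodCat (C D : Cat) : Cat.
Proof.
refine {| ob := (ob C * ob D)%type;
          hom := fun p q => (@hom C (fst p) (fst q) * @hom D (snd p) (snd q))%type;
          idm := fun p => (idm (fst p), idm (snd p));
          comp := fun p q r g f => (comp (fst g) (fst f), comp (snd g) (snd f)) |}.
- intros p q [f1 f2]; simpl; rewrite !comp_idl; reflexivity.
- intros p q [f1 f2]; simpl; rewrite !comp_idr; reflexivity.
- intros p q r s [f1 f2] [g1 g2] [h1 h2]; simpl; rewrite !comp_assoc; reflexivity.
Defined.

Record Functor (C D : Cat) : Type := {
  fo :> ob C -> ob D;
  fm : forall a b, @hom C a b -> @hom D (fo a) (fo b);
  fm_id : forall a, fm (idm a) = idm (fo a);
  fm_comp : forall a b c (g : @hom C b c) (f : @hom C a b),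
      fm (comp g f) = comp (fm g) (fm f) }.
Arguments fm {C D} F {a b} f : rename.

Record SetFunctor (C : Cat) : Type := {
  sob :> ob C -> Type;
  smap : forall a b, @hom C a b -> sob a -> sob b;
  smap_id : forall a (x : sob a), smap (idm a) x = x;
  smap_comp : forall a b c (g : @hom C b c) (f : @hom C a b) (x : sob a),
      smap (comp g f) x = smap g (smap f x) }.
Arguments smap {C} F {a b} f x : rename.

Definition precomp (C D : Cat) (F : SetFunctor D) (R : Functor C D) : SetFunctor C.
Proof.
refine {| sob := fun a => F (R a); smap := fun a b f x => smap F (fm R f) x |}.
- intros a x; simpl; rewrite fm_id; apply smap_id.
- intros a b c g f x; simpl; rewrite fm_comp; apply smap_comp.
Defined.

Definition prodSF (C : Cat) (F G : SetFunctor C) : SetFunctor C.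
Proof.
refine {| sob := fun a => (F a * G a)%type;
          smap := fun a b f x => (smap F f (fst x), smap G f (snd x)) |}.
- intros a [x y]; simpl; rewrite !smap_id; reflexivity.
- intros a b c g f [x y]; simpl; rewrite !smap_comp; reflexivity.
Defined.

Definition homSF (A : Cat) : SetFunctor (prodCat (opCat A) A).
Proof.
refine (@Build_SetFunctor (prodCat (opCat A) A)
          (fun p : ob (opCat A) * ob A => @hom A (fst p) (snd p))
          (fun (p q : ob (opCat A) * ob A) (f : @hom (prodCat (opCat A) A) p q)
               (k : @hom A (fst p) (snd p)) =>
             comp (snd f) (comp k (fst f))) _ _).
- intros [a b] k; simpl; rewrite comp_idl, comp_idr; reflexivity.
- intros [a1 b1] [a2 b2] [a3 b3] [g1 g2] [f1 f2] k; simpl.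
  rewrite !comp_assoc; reflexivity.
Defined.

Definition dipresheaf (B : Cat) := SetFunctor (prodCat (opCat B) B).

(** alpha : F => G is dinatural iff for every f : a -> b in B,
    G(f,id_b) o alpha_b o F(id_b,f) = G(id_a,f) o alpha_a o F(f,id_a)
    as maps F(b,a) -> G(a,b). *)
Definition dinatural (B : Cat) (F G : dipresheaf B)
    (alpha : forall x : ob B, F (x, x) -> G (x, x)) : Prop :=
  forall (a b : ob B) (f : @hom B a b) (y : F (b, a)),
    smap G (a := (b, b)) (b := (a, b)) (f, idm b)
         (alpha b (smap F (a := (b, a)) (b := (b, b)) (idm b, f) y))
    = smap G (a := (a, a)) (b := (a, b)) (idm a, f)
         (alpha a (smap F (a := (b, a)) (b := (a, a)) (f, idm a) y)).

(** Shorthand for the source category A^op x A x C^op x C of Gamma and P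
    (argument order (z', z, x', x)). *)
Definition quadCat (A C : Cat) : Cat :=
  prodCat (prodCat (prodCat (opCat A) A) (opCat C)) C.

Definition diACCat (A C : Cat) : Cat := prodCat (opCat (prodCat A C)) (prodCat A C).

(** Reordering (A x C)^op x (A x C) -> A^op x A x C^op x C,
    ((z',x'),(z,x)) |-> (z',z,x',x): views Gamma, P as difunctors on A x C. *)
Definition reorderAC_ob (A C : Cat) (p : ob (diACCat A C)) : ob (quadCat A C) :=
  let '((z', x'), (z, x)) := p in (((z', z), x'), x).
Definition reorderAC_hom (A C : Cat) (p q : ob (diACCat A C))
  (f : @hom (diACCat A C) p q) : @hom (quadCat A C) (reorderAC_ob p) (reorderAC_ob q) :=
  match p, q return @hom (diACCat A C) p q ->
                    @hom (quadCat A C) (reorderAC_ob p) (reorderAC_ob q) with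
  | ((_, _), (_, _)), ((_, _), (_, _)) =>
      fun f => let '((u', g'), (u, g)) := f in (((u', u), g'), g)
  end f.
Definition reorderAC (A C : Cat) : Functor (diACCat A C) (quadCat A C).
Proof.
refine (@Build_Functor (diACCat A C) (quadCat A C) (@reorderAC_ob A C) (@reorderAC_hom A C) _ _).
- intros [[? ?] [? ?]]; reflexivity.
- intros [[? ?] [? ?]] [[? ?] [? ?]] [[? ?] [? ?]] [[? ?] [? ?]] [[? ?] [? ?]]; reflexivity.
Defined.

Definition tripCat (A C : Cat) : Cat := prodCat (prodCat (opCat A) A) C.
Definition diTCat (A C : Cat) : Cat := prodCat (opCat (tripCat A C)) (tripCat A C).

Definition projHom_ob (A C : Cat) (p : ob (diTCat A C)) : ob (prodCat (opCat A) A) :=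
  let '(_, ((a, b), _)) := p in (a, b).
Definition projHom_hom (A C : Cat) (p q : ob (diTCat A C))
  (f : @hom (diTCat A C) p q) : @hom (prodCat (opCat A) A) (projHom_ob p) (projHom_ob q) :=
  match p, q return @hom (diTCat A C) p q ->
                    @hom (prodCat (opCat A) A) (projHom_ob p) (projHom_ob q) with
  | (((_, _), _), ((_, _), _)), (((_, _), _), ((_, _), _)) =>
      fun f => let '(_, ((u, v), _)) := f in (u, v)
  end f.
Definition projHom (A C : Cat) : Functor (diTCat A C) (prodCat (opCat A) A).
Proof.
refine (@Build_Functor (diTCat A C) (prodCat (opCat A) A) (@projHom_ob A C) (@projHom_hom A C) _ _).
- intros [[[? ?] ?] [[? ?] ?]]; reflexivity.
- intros [[[? ?] ?] [[? ?] ?]] [[[? ?] ?] [[? ?] ?]] [[[? ?] ?] [[? ?] ?]]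
         [[[? ?] ?] [[? ?] ?]] [[[? ?] ?] [[? ?] ?]]; reflexivity.
Defined.

Definition reorderGamma_ob (A C : Cat) (p : ob (diTCat A C)) : ob (quadCat A C) :=
  let '(((a', b'), x'), ((_, _), x)) := p in (((b', a'), x'), x).
Definition reorderGamma_hom (A C : Cat) (p q : ob (diTCat A C))
  (f : @hom (diTCat A C) p q) : @hom (quadCat A C) (reorderGamma_ob p) (reorderGamma_ob q) :=
  match p, q return @hom (diTCat A C) p q ->
                    @hom (quadCat A C) (reorderGamma_ob p) (reorderGamma_ob q) with
  | (((_, _), _), ((_, _), _)), (((_, _), _), ((_, _), _)) =>
      fun f => let '(((u', v'), g'), (_, g)) := f in (((v', u'), g'), g)
  end f.
Definition reorderGamma (A C : Cat) : Functor (diTCat A C) (quadCat A C).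
Proof.
refine (@Build_Functor (diTCat A C) (quadCat A C) (@reorderGamma_ob A C) (@reorderGamma_hom A C) _ _).
- intros [[[? ?] ?] [[? ?] ?]]; reflexivity.
- intros [[[? ?] ?] [[? ?] ?]] [[[? ?] ?] [[? ?] ?]] [[[? ?] ?] [[? ?] ?]]
         [[[? ?] ?] [[? ?] ?]] [[[? ?] ?] [[? ?] ?]]; reflexivity.
Defined.

Definition reorderP_ob (A C : Cat) (p : ob (diTCat A C)) : ob (quadCat A C) :=
  let '((_, x'), ((a, b), x)) := p in (((a, b), x'), x).
Definition reorderP_hom (A C : Cat) (p q : ob (diTCat A C))
  (f : @hom (diTCat A C) p q) : @hom (quadCat A C) (reorderP_ob p) (reorderP_ob q) :=
  match p, q return @hom (diTCat A C) p q ->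
                    @hom (quadCat A C) (reorderP_ob p) (reorderP_ob q) with
  | (((_, _), _), ((_, _), _)), (((_, _), _), ((_, _), _)) =>
      fun f => let '((_, g'), ((u, v), g)) := f in (((u, v), g'), g)
  end f.
Definition reorderP (A C : Cat) : Functor (diTCat A C) (quadCat A C).
Proof.
refine (@Build_Functor (diTCat A C) (quadCat A C) (@reorderP_ob A C) (@reorderP_hom A C) _ _).
- intros [[[? ?] ?] [[? ?] ?]]; reflexivity.
- intros [[[? ?] ?] [[? ?] ?]] [[[? ?] ?] [[? ?] ?]] [[[? ?] ?] [[? ?] ?]]
         [[[? ?] ?] [[? ?] ?]] [[[? ?] ?] [[? ?] ?]]; reflexivity.
Defined.

Definition JSource (A C : Cat) (Gamma : SetFunctor (quadCat A C)) : dipresheaf (tripCat A C) :=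
  prodSF (precomp (homSF A) (projHom A C)) (precomp Gamma (reorderGamma A C)).

Definition JTarget (A C : Cat) (P : SetFunctor (quadCat A C)) : dipresheaf (tripCat A C) :=
  precomp P (reorderP A C).

(* Main.v *)
Require Import Defs.

Definition Jdef (A C : Cat) (Gamma P : SetFunctor (quadCat A C))
  (h : forall zx : ob (prodCat A C),
         precomp Gamma (reorderAC A C) (zx, zx) -> precomp P (reorderAC A C) (zx, zx)) :
  forall abx : ob (tripCat A C), JSource Gamma (abx,abx) -> JTarget P (abx,abx) :=
 fun abx => match abx as t return JSource Gamma (t,t) -> JTarget P (t,t) with
 | ((a,b),x) => fun y => smap P (a:=(((a,a),x),x)) (b:=(((a,b),x),x)) (((idm a, fst y), idm x), idm x)
     (h (a,x) (smap Gamma (a:=(((b,a),x),x)) (b:=(((a,a),x),x)) (((fst y, idm a), idm x), idm x) (snd y))) end.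

Lemma qc (A C : Cat) (F : SetFunctor (quadCat A C)) (a1 b1 c1 a2 b2 c2 : ob A)
  (a3 b3 c3 a4 b4 c4 : ob C)
 (w1 : hom b1 a1) (w2 : hom a2 b2) (w3 : hom b3 a3) (w4 : hom a4 b4)
 (u1 : hom c1 b1) (u2 : hom b2 c2) (u3 : hom c3 b3) (u4 : hom b4 c4) x :
 smap F (a:=(((b1,b2),b3),b4)) (b:=(((c1,c2),c3),c4)) (((u1,u2),u3),u4)
   (smap F (a:=(((a1,a2),a3),a4)) (b:=(((b1,b2),b3),b4)) (((w1,w2),w3),w4) x)
 = smap F (a:=(((a1,a2),a3),a4)) (b:=(((c1,c2),c3),c4))
     (((comp w1 u1, comp u2 w2), comp w3 u3), comp u4 w4) x.
Proof. symmetry. exact (@smap_comp (quadCat A C) F (((a1,a2),a3),a4) (((b1,b2),b3),b4) (((c1,c2),c3),c4) (((u1,u2),u3),u4) (((w1,w2),w3),w4) x). Qed.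

Ltac norm := repeat (rewrite ?comp_idl, ?comp_idr, ?comp_assoc in *).

Theorem mainTheorem1 (A C : Cat) (Gamma P : SetFunctor (quadCat A C))
  (h : forall zx : ob (prodCat A C),
         precomp Gamma (reorderAC A C) (zx, zx) -> precomp P (reorderAC A C) (zx, zx))
  (hdin : @dinatural (prodCat A C) (precomp Gamma (reorderAC A C)) (precomp P (reorderAC A C)) h) :
  exists J : forall abx : ob (tripCat A C),
               JSource Gamma (abx, abx) -> JTarget P (abx, abx),
    @dinatural (tripCat A C) (JSource Gamma) (JTarget P) J /\
    (forall (z : ob A) (x : ob C) (k : Gamma (((z, z), x), x)),
        J ((z, z), x) (idm z, k) = h (z, x) k).
Proof.
  assert (dinA : forall (a1 a2 : ob A) (x : ob C) (u : @hom A a2 a1) (y : Gamma (((a1,a2),x),x)),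
    smap P (a:=(((a1,a1),x),x)) (b:=(((a2,a1),x),x)) (((u,idm a1),idm x),idm x)
      (h (a1,x) (smap Gamma (a:=(((a1,a2),x),x)) (b:=(((a1,a1),x),x)) (((idm a1, u), idm x), idm x) y))
    = smap P (a:=(((a2,a2),x),x)) (b:=(((a2,a1),x),x)) (((idm a2,u),idm x),idm x)
      (h (a2,x) (smap Gamma (a:=(((a1,a2),x),x)) (b:=(((a2,a2),x),x)) (((u, idm a2), idm x), idm x) y))).
  { intros a1 a2 x u y. exact (hdin (a2,x) (a1,x) (u, idm x) y). }
  assert (dinC : forall (a : ob A) (x1 x2 : ob C) (g : @hom C x1 x2) (y : Gamma (((a,a),x2),x1)),
    smap P (a:=(((a,a),x2),x2)) (b:=(((a,a),x1),x2)) (((idm a,idm a),g),idm x2)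
      (h (a,x2) (smap Gamma (a:=(((a,a),x2),x1)) (b:=(((a,a),x2),x2)) (((idm a, idm a), idm x2), g) y))
    = smap P (a:=(((a,a),x1),x1)) (b:=(((a,a),x1),x2)) (((idm a,idm a),idm x1),g)
      (h (a,x1) (smap Gamma (a:=(((a,a),x2),x1)) (b:=(((a,a),x1),x1)) (((idm a, idm a), g), idm x1) y))).
  { intros a x1 x2 g y. exact (hdin (a,x1) (a,x2) (idm a, g) y). }
  exists (@Jdef A C Gamma P h). split.
  2:{ intros z x k. simpl.
      etransitivity; [| exact (@smap_id _ P (((z,z),x),x) (h (z,x) k))].
      f_equal. f_equal. exact (@smap_id _ Gamma (((z,z),x),x) k). }
  intros [[a1 b1] x1] [[a2 b2] x2] [[u v] g] [f k]. simpl in *.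
  rewrite !qc. norm.
  pose proof (f_equal (smap P (a:=(((a2,a1),x2),x2)) (b:=(((a2,b2),x1),x2)) (((idm a2, comp v f), g), idm x2))
     (dinA a1 a2 x2 u (smap Gamma (a:=(((b2,a2),x2),x1)) (b:=(((a1,a2),x2),x2)) (((comp v f, idm a2), idm x2), g) k))) as E1.
  pose proof (f_equal (smap P (a:=(((a1,a1),x1),x2)) (b:=(((a2,b2),x1),x2)) (((u, comp v f), idm x1), idm x2))
     (dinC a1 x1 x2 g (smap Gamma (a:=(((b2,a2),x2),x1)) (b:=(((a1,a1),x2),x1)) (((comp v f, u), idm x2), idm x1) k))) as E2.
  simpl in E1, E2. rewrite !qc in E1, E2. norm.
  rewrite <- E1. exact E2.
Qed.
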